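(* For every $n\ge 2$, $\gamma_{\rm i}(P_n^2)\ge 3\lfloor n/8\rfloor$.
   Context: $P_n$ is the path on $n$ vertices and $P_n^2$ its square (same vertex set, two vertices adjacent iff their distance in $P_n$ is $1$ or $2$). Indicated domination game on a graph $G$: two players, Dominator and Staller, alternate. In each round Dominator indicates a vertex $v$ not yet dominated by the vertices previously selected by Staller (a vertex dominates itself and its neighbors), and Staller must select a vertex of the closed neighborhood $N[v]$, adding it to a set $D$. The game ends when $D$ is a dominating set of $G$. Dominator wants to minimize $|D|$ and Staller to maximize it; the size of $D$ under optimal play of both is the indicated domination number $\gamma_{\rm i}(G)$. *)

(* Defs.v *)
From mathcomp Require Import all_boot.
Set Implicit Arguments. Unset Strict Implicit. Unset Printing Implicit Defensive.

(* A simple graph on a finite vertex type T is given by a symmetric,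
   irreflexive adjacency relation e : rel T. *)

Definition cnbhd (T : finType) (e : rel T) (v : T) : {set T} :=
  [set u | (u == v) || e v u].

Definition dominated_by (T : finType) (e : rel T) (D : {set T}) : {set T} :=
  \bigcup_(u in D) cnbhd e u.

(* ig_val e k D : the number of further vertices added to D under optimal
   play of the indicated domination game, starting from the position where
   Staller has already selected the set D, with a move budget k.  Otherwise Dominator
   indicates an undominated vertex v (minimising), Staller selects a vertex
   u in N[v] (maximising), u is added to D and the game continues.
   Since every selected u is new (v undominated), the game lasts at most #|T|
   rounds, so budget #|T| from the empty position is never exhausted. *)
Fixpoint ig_val (T : finType) (e : rel T) (k : nat) (D : {set T}) : nat :=
  match k with
  | 0 => 0
  | k'.+1 =>
      if dominated_by e D == setT then 0
      else \big[minn/#|T|]_(v in ~: dominated_by e D)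
             \max_(u in cnbhd e v) (ig_val e k' (u |: D)).+1
  end.

Definition indicated_domination_number (T : finType) (e : rel T) : nat :=
  ig_val e #|T| set0.

Definition path_square_rel (n : nat) : rel 'I_n :=
  fun i j => (i != j) && (i <= j + 2) && (j <= i + 2).

Arguments path_square_rel n : clear implicits.

(* Main.v *)
Require Import Defs.
From mathcomp Require Import all_boot.
From mathcomp Require Import zify.
Set Implicit Arguments. Unset Strict Implicit. Unset Printing Implicit Defensive.

Definition hh (tl tr : bool) (L : nat) : nat := minn L ((3*L + 5*tl + 5*tr) %/ 8).

Fixpoint Psi (tl : bool) (k : nat) (l : seq bool) (tr : bool) : nat :=
  match l with
  | [::] => hh tl tr k
  | b :: l' => if b then hh tl true k + Psi true 0 l' tr else Psi tl k.+1 l' tr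
  end.

Definition goodb tl tr L w : bool :=
  [&& tl || (2 <= w), tr || (w <= L+1) &
      hh tl tr L <= hh tl true (w-4) + hh true tr (L-(w+1)) + 1].

Lemma small_ok tl tr L p : L < 8 -> p < L -> has (goodb tl tr L) (iota p 5).
Proof.
case: tl; case: tr; case: L => [|[|[|[|[|[|[|[|L]]]]]]]] //;
  case: p => [|[|[|[|[|[|[|p]]]]]]] //.
Qed.

Lemma pick0 p : 4 <= p -> exists w, [/\ p <= w, w <= p+4 & (3*(w-4)+5) %% 8 <= 1].
Proof.
move=> Hp; have : p %% 8 < 8 by rewrite ltn_pmod.
case E: (p %% 8) => [|[|[|[|[|[|[|[|k]]]]]]]] // _.
- by exists p; split; lia.
- by exists (p+4); split; lia.
- by exists (p+3); split; lia.
- by exists (p+2); split; lia.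
- by exists (p+1); split; lia.
- by exists p; split; lia.
- by exists (p+2); split; lia.
- by exists (p+1); split; lia.
Qed.

Lemma pick1 p : 2 <= p -> exists w, [/\ p <= w, w <= p+4 & (3*(w-4)+10) %% 8 <= 1].
Proof.
move=> Hp; have : p %% 8 < 8 by rewrite ltn_pmod.
case E: (p %% 8) => [|[|[|[|[|[|[|[|k]]]]]]]] // _.
- by exists (p+1); split; lia.
- by exists p; split; lia.
- by exists (p+4); split; lia.
- by exists (p+3); split; lia.
- by exists (p+2); split; lia.
- by exists (p+1); split; lia.
- by exists p; split; lia.
- by exists (p+2); split; lia.
Qed.

Lemma midA tl tr L p w : 8 <= L -> p < L -> p <= w -> w <= p + 4 ->
  (if tl then 2 <= p else 4 <= p) -> (if tr then p + 6 <= L else p + 5 <= L) ->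
  (3*(w-4)+5+5*tl) %% 8 <= 1 ->
  hh tl tr L <= hh tl true (w-4) + hh true tr (L-(w+1)) + 1.
Proof. rewrite /hh; case: tl; case: tr => /=; lia. Qed.

Ltac fin := split; [apply/andP; split; lia | first [done | (simpl; lia)] | first [done | (simpl; lia)] | (unfold hh; simpl; lia)].

Lemma core tl tr L p : p < L -> exists w,
  [/\ p <= w <= p + 4, tl || (2 <= w), tr || (w <= L + 1) &
      hh tl tr L <= hh tl true (w-4) + hh true tr (L-(w+1)) + 1].
Proof.
move=> HpL; case: (ltnP L 8) => HL.
  have /hasP[w] := small_ok tl tr HL HpL.
  rewrite mem_iota => Hw /and3P[H1 H2 H3]; exists w; split=> //; lia.
have Arule : (if tl then 2 <= p else 4 <= p) -> (if tr then p + 6 <= L else p + 5 <= L) ->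
   exists w, [/\ p <= w <= p + 4, tl || (2 <= w), tr || (w <= L + 1) &
      hh tl tr L <= hh tl true (w-4) + hh true tr (L-(w+1)) + 1].
  move=> Hl Hr.
  have [w [H1 H2 H3]] : exists w, [/\ p <= w, w <= p+4 & (3*(w-4)+5+5*tl) %% 8 <= 1].
    case: (tl) Hl => /= Hl.
      by have [w [? ? ?]] := pick1 Hl; exists w; split => //; lia.
    by have [w [? ? ?]] := pick0 Hl; exists w; split => //; lia.
  exists w; split.
  - by rewrite H1 H2.
  - by case: (tl) Hl => //= Hl; lia.
  - by case: (tr) Hr => //= Hr; lia.
  - exact: (midA HL HpL H1 H2 Hl Hr H3).
case: tl Arule => Arule; case: tr Arule => Arule.
- case: (leqP p 1) => Hp1; first by exists 1; fin.
  case: (leqP (L - 1 - p) 1) => Hj1; first by exists (L+2); fin.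
  case: (leqP (L - 1 - p) 4) => Hj4; first by exists (L-3); fin.
  apply: Arule; lia.
- case: (leqP p 1) => Hp1; first by exists 1; fin.
  case: (leqP (L - 1 - p) 3) => Hj3; first by exists (L + 3 - maxn (L-1-p) 2); fin.
  apply: Arule; lia.
- case: (leqP p 3) => Hp3; first by exists (maxn p 2); fin.
  case: (leqP (L - 1 - p) 1) => Hj1; first by exists (L+2); fin.
  case: (leqP (L - 1 - p) 4) => Hj4; first by exists (L-3); fin.
  apply: Arule; lia.
- case: (leqP p 3) => Hp3; first by exists (maxn p 2); fin.
  case: (leqP (L - 1 - p) 3) => Hj3; first by exists (L + 3 - maxn (L-1-p) 2); fin.
  apply: Arule; lia.
Qed.
Lemma hh0 tl tr : hh tl tr 0 = 0. Proof. by rewrite /hh min0n. Qed.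

Lemma PsiS1 l1 l2 tl k tr :
  Psi tl k (l1 ++ true :: l2) tr = Psi tl k l1 true + Psi true 0 l2 tr.
Proof.
elim: l1 tl k => [|b l1 IH] tl k //=.
by case: b => //; rewrite IH addnA.
Qed.

Lemma PsiF m l tl k tr : Psi tl k (nseq m false ++ l) tr = Psi tl (k + m) l tr.
Proof. by elim: m k => [|m IH] k /=; rewrite ?addn0 // IH addnS. Qed.

Lemma PsiT m l tr : Psi true 0 (nseq m true ++ l) tr = Psi true 0 l tr.
Proof. by elim: m => [|m IH] //=. Qed.

Lemma Psi_all l tl tr : all id l -> Psi tl 0 l tr = 0.
Proof.
elim: l tl => [|b l IH] tl; first by rewrite /= hh0.
by move=> /= /andP[-> Hl]; rewrite IH // hh0.
Qed.

Lemma Psi_old tl tr L : Psi tl 0 (nseq L false) tr = hh tl tr L.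
Proof. by rewrite -[nseq L false]cats0 PsiF. Qed.

Lemma Psi_new tl tr x y z : 0 < y ->
  Psi tl 0 (nseq x false ++ nseq y true ++ nseq z false) tr = hh tl true x + hh true tr z.
Proof.
case: y => // y _.
by rewrite PsiF add0n /= PsiT Psi_old.
Qed.

Lemma W_eq tl tr A B : (if tl then exists l0, A = rcons l0 true else A = [::]) ->
  (if tr then exists l3, B = true :: l3 else B = [::]) ->
  exists C R, forall seg, Psi false 0 (A ++ seg ++ B) false = C + Psi tl 0 seg tr + R.
Proof.
have HB : (if tr then exists l3, B = true :: l3 else B = [::]) ->
  exists R, forall t seg, Psi t 0 (seg ++ B) false = Psi t 0 seg tr + R.
  case: tr => [[l3 ->]|->].
    by exists (Psi true 0 l3 false) => t seg; rewrite PsiS1.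
  by exists 0 => t seg; rewrite cats0 addn0.
case: tl => [[l0 ->]|->] /HB [R HR].
  exists (Psi false 0 l0 true), R => seg.
  by rewrite cat_rcons PsiS1 HR addnA.
by exists 0, R => seg; rewrite /= HR.
Qed.

Lemma map_constant (T : Type) (g : nat -> T) c s : (forall i, i \in s -> g i = c) ->
  map g s = nseq (size s) c.
Proof.
elim: s => [|i s IH] //= H.
rewrite H ?mem_head // IH // => j Hj; apply: H; by rewrite inE Hj orbT.
Qed.

Definition fD n (D : {set 'I_n}) (i : nat) : bool :=
  [exists d in D, (d <= i + 2) && (i <= d + 2)].

Definition Phi n (D : {set 'I_n}) : nat := Psi false 0 (map (fD D) (iota 0 n)) false.

Lemma domE n (D : {set 'I_n}) (i : 'I_n) :
  (i \in dominated_by (path_square_rel n) D) = fD D i.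
Proof.
rewrite /dominated_by /fD; apply/bigcupP/existsP.
- case=> d Hd; rewrite /cnbhd inE /path_square_rel => H; exists d; rewrite Hd /=.
  case/orP: H => [/eqP->|/andP[/andP[_ H1] H2]]; first by rewrite !leq_addr.
  by rewrite H1 H2.
- case=> d /andP[Hd H]; exists d => //; rewrite /cnbhd inE /path_square_rel.
  by case: (eqVneq i d) => [->|ne] //=; rewrite ?eqxx //= ?H.
Qed.

Lemma fD_U1 n (D : {set 'I_n}) (u : 'I_n) i :
  fD (u |: D) i = fD D i || ((u <= i + 2) && (i <= u + 2)).
Proof.
rewrite /fD; apply/existsP/orP.
- case=> d /andP[]; rewrite in_setU1 => /orP[/eqP->|Hd] H; first by right.
  by left; apply/existsP; exists d; rewrite Hd.
- case=> [/existsP[d /andP[Hd H]]|H].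
    by exists d; rewrite in_setU1 Hd orbT.
  by exists u; rewrite in_setU1 eqxx.
Qed.

Lemma find_left (f : nat -> bool) v : ~~ f v ->
  exists a, [/\ a <= v, forall i, a <= i <= v -> ~~ f i & (a = 0 \/ f a.-1)].
Proof.
elim: v => [|v IH] Hv.
  exists 0; split; [by [] | | by left].
  move=> i /andP[H1 H2]; have -> : i = 0 by lia. by [].
case Hf: (f v).
  exists v.+1; split => //; last by right.
  move=> i /andP[H1 H2]; have -> : i = v.+1 by lia. by [].
have [a [Ha Hi Ha0]] := IH (negbT Hf).
exists a; split => //; first by lia.
move=> i /andP[H1 H2]; case: (ltnP v i) => H3.
  by have -> : i = v.+1 by lia.
by apply: Hi; rewrite H1 H3.
Qed.

Lemma find_right (f : nat -> bool) n v : v < n -> ~~ f v ->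
  exists b, [/\ v < b <= n, forall i, v <= i < b -> ~~ f i & (b = n \/ f b)].
Proof.
move=> Hvn Hv; move Em: (n - v) => m.
elim: m v Hvn Hv Em => [|m IH] v Hvn Hv Em; first by lia.
case: (eqVneq v.+1 n) => Hn.
  exists n; split; [lia | | by left].
  move=> i /andP[H1 H2]; by have -> : i = v by lia.
case Hf: (f v.+1).
  exists v.+1; split; [lia | | by right].
  move=> i /andP[H1 H2]; by have -> : i = v by lia.
have Hvn' : v.+1 < n by lia.
have [b [Hb Hi Hb0]] := IH v.+1 Hvn' (negbT Hf) (ltac:(lia)).
exists b; split => //; first by lia.
move=> i /andP[H1 H2]; case: (eqVneq i v) => [->//|ne]; apply: Hi; lia.
Qed.

Lemma map_iota_const (T : Type) (g : nat -> T) (c : T) m k :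
  (forall i, m <= i < m + k -> g i = c) -> map g (iota m k) = nseq k c.
Proof.
move=> H; rewrite (map_constant (c := c)) ?size_iota // => i.
by rewrite mem_iota; apply: H.
Qed.

Lemma iota_split3 a x y z :
  iota a (x + y + z) = iota a x ++ iota (a + x) y ++ iota (a + x + y) z.
Proof. by rewrite -addnA iotaD iotaD. Qed.

Lemma move_ok n (D : {set 'I_n}) (v : 'I_n) : ~~ fD D v ->
  exists u : 'I_n, ((u <= v + 2) && (v <= u + 2)) /\ Phi D <= Phi (u |: D) + 1.
Proof.
move=> Hv.
have [a [Hav Hleft Ha]] := find_left Hv.
have [b [Hvb Hright Hb]] := find_right (ltn_ord v) Hv.
have gapF : forall i, a <= i < b -> ~~ fD D i.
  move=> i /andP[H1 H2]; case: (leqP i v) => H3; [apply: Hleft | apply: Hright]; lia.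
have leftD : 0 < a -> 3 <= a /\ (forall i, a - 5 <= i < a -> fD D i).
  move=> Ha0; case: Ha => [Ha|Ha]; first lia.
  move: Ha => /existsP[d /andP[Hd Hd2]].
  have Ha1 := gapF a (ltac:(lia)).
  rewrite /fD negb_exists in Ha1.
  have := forallP Ha1 d; rewrite Hd /= => Hd3.
  split; first lia.
  by move=> i Hi; apply/existsP; exists d; rewrite Hd /=; lia.
have rightD : b < n -> b + 2 < n /\ (forall i, b <= i <= b + 4 -> fD D i).
  move=> Hbn; case: Hb => [Hb|Hb]; first lia.
  move: Hb => /existsP[d /andP[Hd Hd2]].
  have Hb1 := gapF b.-1 (ltac:(lia)).
  rewrite /fD negb_exists in Hb1.
  have := forallP Hb1 d; rewrite Hd /= => Hd3.
  have Hdn := ltn_ord d.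
  split; first lia.
  by move=> i Hi; apply/existsP; exists d; rewrite Hd /=; lia.
have Hp : v - a < b - a by lia.
have [w [Hw1 Hw2 Hw3 Hw4]] := core (0 < a) (b < n) Hp.
have Hu : a + w - 2 < n.
  case: (ltnP b n) => Hbn; first by have [H1 _] := rightD Hbn; lia.
  lia.
have Haw : 2 <= a + w.
  case: (posnP a) => Ha0; first lia.
  by have [H1 _] := leftD Ha0; lia.
exists (Ordinal Hu); split; first by rewrite /=; lia.
have Hab : a <= b by lia.
have E : iota 0 n = iota 0 a ++ iota a (b - a) ++ iota b (n - b).
  have E0 := iota_split3 0 a (b - a) (n - b).
  rewrite add0n (subnKC Hab) in E0.
  by rewrite -E0; congr iota; lia.
have EA : map (fD (Ordinal Hu |: D)) (iota 0 a) = map (fD D) (iota 0 a).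
  apply/eq_in_map => i; rewrite mem_iota add0n => /andP[_ Hi].
  rewrite fD_U1 /=; case Hfi: (fD D i) => //=.
  apply/negbTE/negP => Hn; have [H3 Hl] := leftD (ltac:(lia)).
  by have := Hl i (ltac:(lia)); rewrite Hfi.
have EB : map (fD (Ordinal Hu |: D)) (iota b (n - b)) = map (fD D) (iota b (n - b)).
  apply/eq_in_map => i; rewrite mem_iota => /andP[Hi1 Hi2].
  rewrite fD_U1 /=; case Hfi: (fD D i) => //=.
  apply/negbTE/negP => Hn; have [H3 Hl] := rightD (ltac:(lia)).
  by have := Hl i (ltac:(lia)); rewrite Hfi.
have Egap : map (fD D) (iota a (b - a)) = nseq (b - a) false.
  apply: map_iota_const => i Hi.
  by apply/negbTE/gapF; lia.
have Enew : map (fD (Ordinal Hu |: D)) (iota a (b - a)) =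
   nseq (w - 4) false ++ nseq (b - a - (w - 4) - (b - a - (w + 1))) true
     ++ nseq (b - a - (w + 1)) false.
  rewrite {1}(_ : b - a = (w - 4) + (b - a - (w - 4) - (b - a - (w + 1))) + (b - a - (w + 1)));
    last by lia.
  rewrite iota_split3 !map_cat.
  congr (_ ++ _ ++ _); apply: map_iota_const => i Hi;
    rewrite fD_U1 /= (negbTE (gapF i _)) /=; lia.
have HA : if 0 < a then exists l0, map (fD D) (iota 0 a) = rcons l0 true
          else map (fD D) (iota 0 a) = [::].
  case: (posnP a) => Ha0; first by rewrite ?Ha0.
  exists (map (fD D) (iota 0 a.-1)).
  have Hfa : fD D a.-1 by case: Ha => // ?; lia.
  by rewrite -{1}(prednK Ha0) -addn1 iotaD map_cat /= add0n Hfa cats1.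
have HB : if b < n then exists l3, map (fD D) (iota b (n - b)) = true :: l3
          else map (fD D) (iota b (n - b)) = [::].
  case: (ltnP b n) => Hbn.
    exists (map (fD D) (iota b.+1 (n - b).-1)).
    have Hfb : fD D b by case: Hb => // ?; lia.
    by rewrite {1}(_ : n - b = ((n - b).-1).+1) /= ?Hfb //; lia.
  by rewrite (_ : n - b = 0) //; lia.
have [C [R HCR]] := W_eq HA HB.
rewrite /Phi E !map_cat EA EB Enew Egap !HCR Psi_old Psi_new; last by lia.
lia.
Qed.

Lemma game n k (D : {set 'I_n}) : k <= n ->
  minn k (Phi D) <= ig_val (path_square_rel n) k D.
Proof.
elim: k D => [|k IH] D Hk /=; first by rewrite min0n.
case: ifP => Hdom.
  rewrite /Phi Psi_all ?minn0 //.
  rewrite all_map; apply/allP => i; rewrite mem_iota add0n => /andP[_ Hi] /=.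
  by rewrite -[i]/(nat_of_ord (Ordinal Hi)) -domE (eqP Hdom) inE.
apply: (big_ind (fun x => minn k.+1 (Phi D) <= x)).
- by rewrite card_ord; lia.
- by move=> x y Hx Hy; rewrite leq_min Hx Hy.
- move=> v; rewrite inE domE => Hv.
  have [u [Hu Hphi]] := move_ok Hv.
  have Hcn : u \in cnbhd (path_square_rel n) v.
    rewrite /cnbhd inE /path_square_rel.
    by case: (eqVneq u v) => [->|ne] //=; rewrite ?eqxx //= ?eq_sym ?ne //=; lia.
  apply: leq_trans (leq_bigmax_cond _ Hcn).
  have := IH (u |: D) (ltnW Hk); lia.
Qed.

Lemma Phi_set0 n : Phi (set0 : {set 'I_n}) = hh false false n.
Proof.
rewrite /Phi (@map_iota_const _ _ false) ?Psi_old // => i _.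
by apply/negbTE; rewrite /fD; apply/existsP => -[d]; rewrite inE.
Qed.

Theorem corollary6p2 (n : nat) (hn : 2 <= n) :
  3 * (n %/ 8) <= indicated_domination_number (path_square_rel n).
Proof.
rewrite /indicated_domination_number.
apply: leq_trans (game _ (eq_leq (card_ord n))).
rewrite card_ord Phi_set0 /hh /= !muln0 !addn0; lia.
Qed.
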